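(* Let $q,q',n$ be integers with $q'\ge 2q+1>4$ and $n>1$. Let $S$ be an $\mathcal{OS}_q(n)$ of period $m$ with ring sequence $[s_0,\ldots,s_{m-1}]$ where $s_0=0$. For $x\in\mathbb{Z}_q$ let $x'$ denote the class in $\mathbb{Z}_{q'}$ of the integer in $\{0,\ldots,q-1\}$ representing $x$. Let $S''$ be the sequence over $\mathbb{Z}_{q'}$ with ring sequence $[s_0',\ldots,s_{m-1}',-s_0',\ldots,-s_{m-1}']$. Define $t_i=(-1)^{i+m-1}s_i'$ if $s_i'\neq0$ and $t_i=(-1)^{i+m-1}q$ if $s_i'=0$ ($0\le i\le m-1$), and let $T'$ be the sequence over $\mathbb{Z}_{q'}$ with ring sequence $[t_0,\ldots,t_{m-1},-t_0,\ldots,-t_{m-1}]$. Then $S''$ and $T'$ are s-disjoint.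
   Context: For a periodic sequence $S=(s_i)$ write $\mathbf{s}_n(i)=(s_i,\ldots,s_{i+n-1})$; $\mathbf{u}^R$ is the reverse of a tuple and $-\mathbf{u}$ its termwise negative. An $n$-window sequence of period $m$ satisfies $\mathbf{s}_n(i)=\mathbf{s}_n(j)\Rightarrow i\equiv j\pmod m$; an $\mathcal{OS}_q(n)$ is a $q$-ary $n$-window sequence with $\mathbf{s}_n(i)\neq\mathbf{s}_n(j)^R$ for all $i,j$. The ring sequence of a sequence of period $m$ is one period. Two $n$-window sequences $S=(s_i)$, $T=(t_i)$ are s-disjoint if for all $i,j$: $\mathbf{s}_n(i)\neq\mathbf{t}_n(j)$, $\mathbf{s}_n(i)\neq\mathbf{t}_n(j)^R$ and $\mathbf{s}_n(i)\neq-\mathbf{t}_n(j)^R$. *)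

(* Defs.v *)
From mathcomp Require Import all_boot all_order all_algebra.
Set Implicit Arguments. Unset Strict Implicit. Unset Printing Implicit Defensive.
Import GRing.Theory.
Local Open Scope ring_scope.

(* The periodic sequence (indexed by nat) whose ring sequence (one period) is r. *)
Definition seq_of (T : zmodType) (r : seq T) (i : nat) : T := nth 0 r (i %% size r).

Definition window (T : Type) (s : nat -> T) (n i : nat) : seq T :=
  [seq s (i + k)%N | k <- iota 0 n].

Definition n_window (T : eqType) (s : nat -> T) (n m : nat) : Prop :=
  forall i j : nat, window s n i = window s n j -> i = j %[mod m].

(* OS_q(n) given by its ring sequence r (period m = size r) *)
Definition is_OS (T : zmodType) (n : nat) (r : seq T) : Prop :=
  n_window (seq_of r) n (size r) /\
  forall i j : nat, window (seq_of r) n i <> rev (window (seq_of r) n j).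

Definition s_disjoint (T : zmodType) (n : nat) (s t : nat -> T) : Prop :=
  forall i j : nat,
    [/\ window s n i <> window t n j,
        window s n i <> rev (window t n j) &
        window s n i <> map (fun x => - x) (rev (window t n j))].

Definition liftZ (q q' : nat) (x : 'Z_q) : 'Z_q' := (nat_of_ord x)%:R.

Definition tseq (q q' : nat) (r' : seq 'Z_q') : seq 'Z_q' :=
  [seq (-1) ^+ (i + size r' - 1)%N * (if r'`_i != 0 then r'`_i else q%:R)
  | i <- iota 0 (size r')].

(* Main.v *)
Require Import Defs.
From mathcomp Require Import all_boot all_order all_algebra.
From mathcomp Require Import zify.
Import GRing.Theory.
Local Open Scope ring_scope.

Definition cls (q p : nat) (x : 'Z_p.+2) : nat :=
  let v := nat_of_ord x in
  if v == 0%N then 0%N else if (v < q)%N then 1%N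
  else if (p.+2 - q < v)%N then 2%N else 3%N.

Definition swap (c : nat) : nat := if c == 1%N then 2%N else if c == 2%N then 1%N else c.

Lemma cls_opp q p (x : 'Z_p.+2) : (q <= p.+2 - q)%N -> cls q p (-x) = swap (cls q p x).
Proof.
move=> hq; rewrite /cls /swap.
have hx : (x < p.+2)%N := ltn_ord x.
have -> : nat_of_ord (- x) = ((p.+2 - x) %% p.+2)%N by [].
case: (eqVneq (nat_of_ord x) 0%N) => [->|h0].
  by rewrite subn0 modnn.
rewrite modn_small; last by lia.
have -> : ((p.+2 - x)%N == 0%N) = false by apply/eqP; lia.
rewrite ?(negbTE h0).
case: (ltnP x q) => h1; case: (ltnP (p.+2 - q) x) => h2;
case: (ltnP (p.+2 - x) q) => h3; case: (ltnP (p.+2 - q) (p.+2 - x)) => h4 /=; lia.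
Qed.

Lemma swapK c : swap (swap c) = c.
Proof. by rewrite /swap; case: c => [|[|[|c]]]. Qed.

Definition posc (c : nat) : bool := (c == 1%N) || (c == 3%N).
Definition negc (c : nat) : bool := (c == 2%N) || (c == 3%N).
Definition Tg' (ca cb : nat) : bool := (posc ca && negc cb) || (negc ca && posc cb).
Definition Sg' (ca cb : nat) : bool :=
  ((ca <= 1) && (cb <= 1))%N || ((swap ca <= 1) && (swap cb <= 1))%N.

Lemma posc_swap c : posc (swap c) = negc c.
Proof. by rewrite /swap; case: c => [|[|[|[|c]]]]. Qed.
Lemma negc_swap c : negc (swap c) = posc c.
Proof. by rewrite /swap; case: c => [|[|[|[|c]]]]. Qed.

Lemma Tg'_swap a b : Tg' a b -> Tg' (swap a) (swap b).
Proof. by rewrite /Tg' !posc_swap !negc_swap orbC. Qed.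
Lemma Tg'_sym a b : Tg' a b -> Tg' b a.
Proof. by rewrite /Tg'; case: (posc a); case: (negc a); case: (posc b); case: (negc b). Qed.

Lemma SgTg a b : Sg' a b -> Tg' a b -> False.
Proof.
rewrite /Sg' /Tg' /swap /posc /negc.
by case: a => [|[|[|[|a]]]]; case: b => [|[|[|[|b]]]].
Qed.

Lemma Tg'_3 a b : (0 < a <= 3)%N -> b = 3%N -> Tg' a b.
Proof. by move=> + ->; rewrite /Tg' /posc /negc; case: a => [|[|[|[|a]]]]. Qed.

Lemma cls_le3 q p x : (cls q p x <= 3)%N.
Proof. by rewrite /cls; repeat case: ifP. Qed.

Lemma cls0 q p : cls q p 0 = 0%N.
Proof. by []. Qed.

Lemma cls_sign q p e (u : 'Z_p.+2) : (q <= p.+2 - q)%N ->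
  cls q p ((-1) ^+ e * u) = if odd e then swap (cls q p u) else cls q p u.
Proof.
move=> hq; rewrite -signr_odd; case: (odd e); last by rewrite expr0 mul1r.
by rewrite expr1 mulN1r cls_opp.
Qed.

Lemma cls_lift k p (x : 'Z_k.+2) : (k.+2 < p.+2)%N -> (cls k.+2 p (@liftZ k.+2 p.+2 x) <= 1)%N.
Proof.
move=> hk; rewrite /cls /liftZ.
have hx : (x < k.+2)%N := ltn_ord x.
have -> : nat_of_ord ((nat_of_ord x)%:R : 'Z_p.+2) = (x %% p.+2)%N by rewrite val_Zp_nat.
rewrite modn_small; last by lia.
by case: eqP => //; rewrite hx.
Qed.

Lemma cls_q k p : (2 * k.+2 + 1 <= p.+2)%N -> cls k.+2 p (k.+2%:R) = 3%N.
Proof.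
move=> hk; rewrite /cls.
have -> : nat_of_ord (k.+2%:R : 'Z_p.+2) = (k.+2 %% p.+2)%N by rewrite val_Zp_nat.
rewrite modn_small; last by lia.
rewrite ltnn /=; case: ltnP => //; lia.
Qed.

Lemma nth_cat_opp (T : zmodType) (x : seq T) j :
  nth 0 (x ++ map (fun y => - y) x) j = if (j < size x)%N then x`_j else - x`_(j - size x).
Proof.
rewrite nth_cat; case: ltnP => // _.
case: (ltnP (j - size x) (size x)) => h; first by rewrite (nth_map 0).
by rewrite !nth_default ?oppr0 ?size_map.
Qed.

Lemma nth_window (T : zmodType) (s : nat -> T) n i j : (j < n)%N -> nth 0 (window s n i) j = s (i + j)%N.
Proof. by move=> h; rewrite /window (nth_map 0%N) ?size_iota // nth_iota. Qed.

Lemma size_window (T : Type) (s : nat -> T) n i : size (window s n i) = n.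
Proof. by rewrite /window size_map size_iota. Qed.

Lemma modS_next i M : (0 < M)%N ->
  (i.+1 %% M = if (i %% M).+1 < M then (i %% M).+1 else 0)%N.
Proof.
move=> hM; rewrite -addn1 -modnDml addn1.
have := ltn_mod i M; rewrite hM => /= h.
case: ltnP => h2; first by rewrite modn_small.
have -> : (i %% M).+1 = M by lia.
by rewrite modnn.
Qed.

Lemma cls_eq0 q p (x : 'Z_p.+2) : (cls q p x == 0%N) = (x == 0).
Proof.
have -> : (x == 0) = (nat_of_ord x == 0%N) by [].
by rewrite /cls; case: eqP => //; repeat case: ifP.
Qed.

Lemma nz_swap c : (0 < c <= 3)%N -> (0 < swap c <= 3)%N.
Proof. by rewrite /swap; case: c => [|[|[|[|c]]]]. Qed.

Lemma posc_nz c : posc c -> (0 < c <= 3)%N.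
Proof. by rewrite /posc; case: c => [|[|[|[|c]]]]. Qed.

Section Main.
Variables (k p : nat) (r : seq 'Z_k.+2).
Hypothesis hk : (2 * k.+2 + 1 <= p.+2)%N.
Hypothesis hm : (0 < size r)%N.
Hypothesis h0 : r`_0 = 0.

Let hq : (k.+2 <= p.+2 - k.+2)%N. Proof. lia. Qed.
Let hq2 : (k.+2 < p.+2)%N. Proof. lia. Qed.

Let rr := map (@liftZ k.+2 p.+2) r.
Let m := size rr.
Let hm' : (0 < m)%N. Proof. by rewrite /m size_map. Qed.

Lemma rr_cls j : (cls k.+2 p (nth 0%R rr j) <= 1)%N.
Proof.
case: (ltnP j (size r)) => h; first by rewrite (nth_map 0) // cls_lift.
by rewrite nth_default ?size_map.
Qed.

Lemma rr0 : rr`_0 = 0.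
Proof. by rewrite (nth_map 0) // h0 /liftZ. Qed.

Lemma S_pair i : Sg' (cls k.+2 p (seq_of (rr ++ map (fun x => - x) rr) i))
                     (cls k.+2 p (seq_of (rr ++ map (fun x => - x) rr) i.+1)).
Proof.
have E : size (rr ++ map (fun x => - x) rr) = (m + m)%N by rewrite size_cat (size_map (fun x : 'Z_p.+2 => - x)).
rewrite /seq_of E.
rewrite modS_next; last by lia.
have := ltn_mod i (m + m); rewrite (_ : (0 < m + m)%N = true); last by lia.
move=> /= hk0; set k0 := (i %% (m + m))%N in hk0 *.
case: (ltnP k0.+1 (m + m)) => h2 /=; rewrite !nth_cat_opp -/m ?hm';
case: (ltnP k0 m) => h1; try case: (ltnP k0.+1 m) => h3 //=;
  try (exfalso; lia).
- by rewrite /Sg' !rr_cls.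
- have -> : (k0.+1 - m)%N = 0%N by lia.
  by rewrite rr0 oppr0 cls0 /Sg' rr_cls.
- by rewrite /Sg' !cls_opp // !swapK !rr_cls orbT.
- by rewrite rr0 cls0 /Sg' cls_opp // swapK rr_cls orbT.
Qed.

Let t := tseq k.+2 rr.
Let u j := if rr`_j != 0 then rr`_j else (k.+2)%:R.

Lemma size_t : size t = m.
Proof. by rewrite /t /tseq size_map size_iota. Qed.

Lemma t_nth j : (j < m)%N -> t`_j = (-1) ^+ (j + m - 1) * u j.
Proof. by move=> hj; rewrite /t /tseq (nth_map 0%N) ?size_iota // nth_iota. Qed.

Lemma u_cls j : posc (cls k.+2 p (u j)).
Proof.
rewrite /u; case: ifP => h; last by rewrite cls_q.
have := rr_cls j; rewrite -(cls_eq0 k.+2) in h.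
by move: h; rewrite /posc; case: (cls _ _ _) => [|[|c]].
Qed.

Lemma t_cls j : (j < m)%N -> cls k.+2 p t`_j =
  if odd (j + m - 1) then swap (cls k.+2 p (u j)) else cls k.+2 p (u j).
Proof. by move=> hj; rewrite t_nth // cls_sign. Qed.

Lemma t_nz j : (j < m)%N -> (0 < cls k.+2 p (nth 0%R t j) <= 3)%N.
Proof.
move=> hj; rewrite t_cls //; have := @posc_nz _ (u_cls j).
by case: odd => // /nz_swap.
Qed.

Lemma t0 : cls k.+2 p t`_0 = 3%N.
Proof.
rewrite t_cls // /u rr0 eqxx /= cls_q //.
by case: odd.
Qed.

Lemma t_pair j : (j.+1 < m)%N -> Tg' (cls k.+2 p t`_j) (cls k.+2 p t`_j.+1).
Proof.
move=> hj; rewrite !t_cls //; last by lia.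
have -> : odd (j.+1 + m - 1) = ~~ odd (j + m - 1).
  by rewrite (_ : (j.+1 + m - 1 = (j + m - 1).+1)%N) ?oddS //; lia.
have u1 := u_cls j; have u2 := u_cls j.+1.
by case: odd => /=; rewrite /Tg' ?negc_swap ?posc_swap u1 u2 ?orbT.
Qed.

Lemma T_pair i : Tg' (cls k.+2 p (seq_of (t ++ map (fun x => - x) t) i))
                     (cls k.+2 p (seq_of (t ++ map (fun x => - x) t) i.+1)).
Proof.
have E : size (t ++ map (fun x => - x) t) = (m + m)%N by rewrite size_cat (size_map (fun x : 'Z_p.+2 => - x)) size_t.
rewrite /seq_of E.
rewrite modS_next; last by lia.
have := ltn_mod i (m + m); rewrite (_ : (0 < m + m)%N = true); last by lia.
move=> /= hk0; set k0 := (i %% (m + m))%N in hk0 *.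
case: (ltnP k0.+1 (m + m)) => h2 /=; rewrite !nth_cat_opp size_t ?hm';
case: (ltnP k0 m) => h1; try case: (ltnP k0.+1 m) => h3 //=;
  try (exfalso; lia).
- exact: t_pair.
- have -> : (k0.+1 - m)%N = 0%N by lia.
  by apply: Tg'_3; [exact: t_nz | rewrite cls_opp // t0].
- rewrite !cls_opp //; apply: Tg'_swap.
  have -> : (k0.+1 - m)%N = (k0 - m).+1 by lia.
  apply: t_pair; lia.
- apply: Tg'_3; last exact: t0.
  rewrite cls_opp //; apply: nz_swap; apply: t_nz; lia.
Qed.

End Main.


Lemma win_eq (T : zmodType) (s : nat -> T) n i w :
  window s n i = w -> forall l, (l < n)%N -> s (i + l)%N = nth 0 w l.
Proof. by move=> <- l hl; rewrite nth_window. Qed.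

Theorem corollary3p17 (q q' n : nat) (r : seq 'Z_q) :
  (2 * q + 1 <= q')%N -> (4 < 2 * q + 1)%N -> (1 < n)%N ->
  (0 < size r)%N -> is_OS n r -> r`_0 = 0 ->
  let r' := map (@liftZ q q') r in
  let t := tseq q r' in
  s_disjoint n (seq_of (r' ++ map (fun x => - x) r'))
               (seq_of (t ++ map (fun x => - x) t)).
Proof.
case: q r => [|[|k]] r; try (move=> _ h; exfalso; lia).
case: q' => [|[|p]]; try (move=> h; exfalso; lia).
case: n => [|[|n]]; try (move=> _ _ h; exfalso; lia).
move=> hk _ _ hm _ h0 r' t i j.
have hq : (k.+2 <= p.+2 - k.+2)%N by lia.
have HS := @S_pair k p r hk hm h0 i; have HT := @T_pair k p r hk hm h0.
rewrite -/r' -/t in HS HT.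
set sS := seq_of (r' ++ _) in HS *; set tT := seq_of (t ++ _) in HT *.
have hrev : forall l, (l < n.+2)%N ->
   nth 0 (rev (window tT n.+2 j)) l = tT (j + (n.+1 - l))%N.
  move=> l hl; rewrite nth_rev size_window // nth_window //; lia.
split => E.
- have a0 := @win_eq _ _ _ _ _ E 0 isT.
  have a1 := @win_eq _ _ _ _ _ E 1 isT.
  rewrite !nth_window // !addn0 !addn1 in a0 a1.
  by apply: (SgTg _ _ HS); rewrite a0 a1; exact: HT.
- have a0 := @win_eq _ _ _ _ _ E 0 isT.
  have a1 := @win_eq _ _ _ _ _ E 1 isT.
  rewrite !hrev // !addn0 !addn1 subn0 subSS subn0 in a0 a1.
  by apply: (SgTg _ _ HS); rewrite a0 a1 addnS; apply: Tg'_sym; exact: HT.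
- have a0 := @win_eq _ _ _ _ _ E 0 isT.
  have a1 := @win_eq _ _ _ _ _ E 1 isT.
  rewrite !(nth_map 0) ?size_rev ?size_window // !hrev // !addn0 !addn1 subn0 subSS subn0 in a0 a1.
  apply: (SgTg _ _ HS); rewrite a0 a1 !cls_opp // addnS; apply: Tg'_swap; apply: Tg'_sym; exact: HT.
Qed.
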